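(* Let $G$ be a finite $4$-valent graph (loops and multiple edges allowed) embedded in the plane, and let $P$ be a face (polygon) of this embedding. Then no two sides of $P$ are the same edge of $G$; that is, no edge of $G$ occurs twice in the boundary of $P$.
   Context: A polygon in a planar graph is a face of the planar embedding; its sides are the edges traversed along its boundary. *)

(* Defs.v *)
From mathcomp Require Import all_boot.
Set Implicit Arguments. Unset Strict Implicit. Unset Printing Implicit Defensive.

(* A finite graph embedded in an oriented surface is encoded as a combinatorial
   map (rotation system) on a finite set D of darts (half-edges):
   - e : D -> D, a fixed-point-free involution; its orbits {x, e x} are the edges;
   - n : D -> D, a permutation; its orbits are the vertices (cyclic order of
     darts around the vertex); the degree of the vertex of x is order n x;
   - the faces are the orbits of the face permutation  f := n \o e  :
     going along a face boundary, the dart x is the side (edge {x, e x})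
     traversed and n (e x) is the next side.
   Loops (e x in the n-orbit of x) and multiple edges are allowed. *)

Section CombMap.
Variables (D : finType) (e n : D -> D).

Definition edge_perm_ok := involutive e /\ (forall x, e x != x).
Definition face_perm : D -> D := fun x => n (e x).

Definition glink : rel D :=
  [rel x y | [|| y == e x, y == n x, x == e y | x == n y]].

Definition num_vertices := fcard n D.
Definition num_edges := fcard e D.
Definition num_faces := fcard face_perm D.
Definition num_components := n_comp glink D.

(* planarity: every connected component is embedded in the sphere (genus 0),
   i.e. Euler's formula V - E + F = 2 C (written additively in nat). *)
Definition planar_map :=
  num_vertices + num_faces = num_edges + 2 * num_components.

Definition four_valent := forall x : D, order n x = 4.

Definition same_edge (x y : D) := (y == x) || (y == e x).

Definition in_face (p x : D) := fconnect face_perm p x.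
End CombMap.

(* Main.v *)
Require Import Defs.
From mathcomp Require Import all_boot.
From mathcomp Require Import fingroup perm zify.
Set Implicit Arguments. Unset Strict Implicit. Unset Printing Implicit Defensive.

Section Aux.
Variable D : finType.

Lemma porbit_fconnect (s : {perm D}) x : porbit s x =i fconnect s x.
Proof.
move=> y; apply/porbitP/idP => [[i ->]|h].
  by rewrite permX; apply: fconnect_iter.
by exists (findex s x y); rewrite permX iter_findex.
Qed.

Lemma fcard_porbits (s : {perm D}) : fcard s D = #|porbits s|.
Proof.
have symf : connect_sym (frel s) := fconnect_sym (@perm_inj _ s).
have -> : porbits s = porbit s @: [set x | froots s x].
  apply/setP => O; apply/imsetP/imsetP => [[x _ ->]|[x _ ->]]; last by exists x.
  exists (froot s x); first by rewrite inE roots_root.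
  apply/setP => y; rewrite !porbit_fconnect.
  by apply: same_connect => //; apply: connect_root.
rewrite card_in_imset; last first.
  move=> u v; rewrite !inE => /eqP ru /eqP rv /eqP.
  rewrite eq_porbit_mem porbit_fconnect => h.
  by rewrite -ru -rv; apply/rootP => //; rewrite symf.
by apply: eq_card => x; rewrite !inE andbT.
Qed.

Lemma fcard_swap (f : D -> D) (finj : injective f) a b :
  fcard (fun z => f (tperm a b z)) D + (~~ fconnect f b a).*2 = fcard f D + (a != b).
Proof.
pose s := perm finj.
have := porbits_mul_tperm s a b; rewrite /= -!fcard_porbits porbit_fconnect.
have e1 : (tperm a b * s)%g =1 (fun z => f (tperm a b z)) by move=> z; rewrite permM permE.
have e2 : s =1 f by move=> z; rewrite permE.
have e3 : (a \in fconnect s b) = fconnect f b a by rewrite -(eq_fconnect e2).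
by rewrite (eq_fcard e1) (eq_fcard e2) e3.
Qed.

Lemma order2 (g : D -> D) z : g z != z -> g (g z) = z -> fingraph.order g z = 2.
Proof.
move=> ne gg.
have cyc : fcycle g [:: z; g z] by rewrite /= !eqxx gg eqxx.
rewrite (order_cycle cyc) //; last by rewrite mem_head.
by rewrite /= andbT inE eq_sym.
Qed.

End Aux.

Section Conn.
Variable D : finType.

Lemma path_add (r s : rel D) (P : pred D) : connect_sym r ->
  (forall x y, connect r x y -> P y -> P x) ->
  (forall x y, s x y -> connect r x y || (P x && P y)) ->
  forall u v, connect s u v -> connect r u v || (P u && P v).
Proof.
move=> symr Pc hs u v /connectP [p sp ->].
elim: p u sp => [|w p IH] u /=; first by rewrite connect0.
case/andP => suw /IH.
case/orP: (hs _ _ suw) => [ruw|/andP[pu pw]] /orP [rwv | /andP[pw' pv]].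
- by rewrite (connect_trans ruw rwv).
- by rewrite (Pc _ _ ruw pw') pv orbT.
- by rewrite pu (Pc (last w p) w) ?orbT // symr.
- by rewrite pu pv orbT.
Qed.

Lemma ncomp_add (r s : rel D) (a b : D) : connect_sym r -> connect_sym s ->
  (forall x y, s x y -> connect r x y ||
     ((connect r x a || connect r x b) && (connect r y a || connect r y b))) ->
  n_comp r D <= n_comp s D + 1.
Proof.
move=> symr syms hs.
pose P := fun z => connect r z a || connect r z b.
have Pc : forall x y, connect r x y -> P y -> P x.
  move=> x y rxy; rewrite /P => /orP [h|h].
    by rewrite (connect_trans rxy h).
  by rewrite (connect_trans rxy h) orbT.
have key := @path_add r s P symr Pc hs.
pose S := [set x | roots r x].
have -> : n_comp r D = #|S| by apply: eq_card => x; rewrite !inE andbT.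
have -> : n_comp s D = #|[set x | roots s x]| by apply: eq_card => x; rewrite !inE andbT.
pose S' := S :\ root r b.
have h1 : #|S| <= #|S'| + 1 by rewrite (cardsD1 (root r b) S) addnC leq_add2l leq_b1.
have ha : forall u, u \in S' -> P u -> connect r u a.
  move=> u; rewrite !inE => /andP [ub /eqP ru] /orP [//|rub].
  by move/(rootP symr): rub; rewrite ru => ub'; rewrite ub' eqxx in ub.
have inj : {in S' &, injective (root s)}.
  move=> u v uS vS /(rootP syms) /key /orP h.
  have ruv : connect r u v.
    case: h => [//|/andP [pu pv]].
    by rewrite (connect_trans (ha u uS pu)) // symr (ha v vS pv).
  move: uS vS; rewrite !inE => /andP [_ /eqP ru] /andP [_ /eqP rv].
  by rewrite -ru -rv; apply/(rootP symr).
apply: (leq_trans h1); rewrite leq_add2r -(card_in_imset inj).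
apply: subset_leq_card; apply/subsetP => z /imsetP [u _ ->].
by rewrite inE roots_root.
Qed.

End Conn.

Section Genus.
Variable D : finType.

Definition R2 (s t : D -> D) : rel D :=
  [rel x y | [|| y == s x, y == t x, x == s y | x == t y]].

Lemma R2_sym s t : connect_sym (R2 s t).
Proof.
apply: sym_connect_sym => x y /=.
rewrite /R2 /=; by case: (y == s x); case: (y == t x); case: (x == s y); case: (x == t y).
Qed.

Lemma R2s s t x : R2 s t x (s x).
Proof. by rewrite /R2 /= eqxx. Qed.
Lemma R2t s t x : R2 s t x (t x).
Proof. by rewrite /R2 /= eqxx orbT. Qed.
Lemma C2s s t x : connect (R2 s t) (s x) x.
Proof. by rewrite R2_sym connect1 // R2s. Qed.
Lemma C2t s t x : connect (R2 s t) (t x) x.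
Proof. by rewrite R2_sym connect1 // R2t. Qed.

Lemma genus_id (s t : D -> D) : injective s -> (forall z, t z = z) ->
  fcard s D + fcard t D + fcard (fun z => s (t z)) D <= #|D| + 2 * n_comp (R2 s t) D.
Proof.
move=> sinj tid.
have -> : fcard t D = #|D| by rewrite (eq_fcard tid) fcard_id.
have -> : fcard (fun z => s (t z)) D = fcard s D.
  by apply: eq_fcard => z; rewrite tid.
have -> : n_comp (R2 s t) D = fcard s D.
  apply: eq_n_comp => x y; apply/idP/idP; apply: connect_sub => {}x {}y /=.
    case/or4P => /eqP ->; rewrite ?tid ?connect0 //; first exact: fconnect1.
    by rewrite fconnect_sym //; apply: fconnect1.
  by move=> /eqP <-; apply: connect1; rewrite /R2 /= eqxx.
lia.
Qed.

Lemma genus_N N (s t : D -> D) : injective s -> injective t ->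
  #|[pred z | t z != z]| <= N ->
  fcard s D + fcard t D + fcard (fun z => s (t z)) D <= #|D| + 2 * n_comp (R2 s t) D.
Proof.
elim: N t => [|N IH] t sinj tinj hN.
  apply: genus_id => // z; apply/eqP; apply/negPn/negP => h.
  by move: hN; rewrite leqn0 => /eqP /card0_eq /(_ z); rewrite inE h.
case: (pickP [pred z | t z != z]) => [a ta | none]; last first.
  by apply: genus_id => // z; apply/eqP; move: (none z); rewrite inE => /negbFE.
pose b := finv t a.
have tb : t b = a by rewrite /b f_finv.
have ab : a != b by apply/eqP => e; move: ta; rewrite /= {1}e tb eqxx.
pose t' := fun z => t (tperm a b z).
have t'inj : injective t' by move=> u v /tinj /perm_inj.
have t'a : t' a = a by rewrite /t' tpermL.
have t'b : t' b = t a by rewrite /t' tpermR.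
have t'D : forall x, x != a -> x != b -> t' x = t x.
  by move=> x xa xb; rewrite /t' tpermD // eq_sym.
have hN' : #|[pred z | t' z != z]| <= N.
  have : #|[pred z | t z != z]| = #|[predD1 [pred z | t z != z] & a]|.+1.
    by rewrite (cardD1 a) [a \in _]ta.
  move=> e; move: hN; rewrite e ltnS; apply: leq_trans.
  apply: subset_leq_card; apply/subsetP => z; rewrite !inE.
  case: (eqVneq z a) => [->|za]; first by rewrite t'a eqxx.
  case: (eqVneq z b) => [->|zb]; last by rewrite t'D.
  by rewrite tb eq_sym ab.
have IH' := IH t' sinj t'inj hN'.
have st'inj : injective (fun z => s (t' z)) by move=> u v /sinj /t'inj.
have f1 := fcard_swap tinj a b.
have ftba : fconnect t b a by rewrite -{1}tb fconnect1.
rewrite ftba ab -/t' /= in f1.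
have f2 := fcard_swap st'inj a b.
have e2 : (fun z => s (t' (tperm a b z))) =1 (fun z => s (t z)).
  by move=> z; rewrite /t' tpermK.
rewrite (eq_fcard e2) ab in f2.
pose R' := R2 s t'.
have symR' := R2_sym s t'.
pose P := fun z => connect R' z a || connect R' z b.
have tedge : forall x, connect R' x (t x) || (P x && P (t x)).
  move=> x; case: (eqVneq x a) => [->|xa].
    by rewrite -t'b /P connect0 /= C2t !orbT.
  case: (eqVneq x b) => [->|xb]; first by rewrite tb /P !connect0 !orbT.
  by rewrite -(t'D x) // (connect1 (R2t s t' x)).
have cond : forall x y, R2 s t x y -> connect R' x y || (P x && P y).
  move=> x y /or4P [/eqP->|/eqP->|/eqP->|/eqP->].
  - by rewrite (connect1 (R2s s t' x)).
  - exact: tedge.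
  - by rewrite (C2s s t' y).
  - by rewrite symR' andbC; apply: tedge.
rewrite -/R' in IH'.
have f1' : fcard t' D = fcard t D + 1 by move: f1; rewrite double0 addn0.
have f2' : fcard (fun z => s (t z)) D <= fcard (fun z => s (t' z)) D + 1.
  by move: f2; case: (~~ _) => /=; lia.
case: (boolP (connect R' a b)) => cab.
  have -> : n_comp (R2 s t) D = n_comp R' D.
    apply: eq_n_comp => x y; apply/idP/idP; apply: connect_sub => {}x {}y.
      move/cond => /orP [//|/andP [px py]].
      have ha : forall z, P z -> connect R' z a.
        by move=> z /orP [//|h]; rewrite (connect_trans h) // symR'.
      by rewrite (connect_trans (ha x px)) // symR' ha.
    have tedge' : forall x, connect (R2 s t) x (t' x).
      move=> z; case: (eqVneq z a) => [->|za]; first by rewrite t'a connect0.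
      case: (eqVneq z b) => [->|zb]; last by rewrite t'D // connect1 // R2t.
      by rewrite t'b (connect_trans (connect1 (R2t s t b))) // tb connect1 // R2t.
    rewrite /R' /R2 /=; case/or4P => /eqP->; rewrite -/(R2 s t).
    - by rewrite connect1 // R2s.
    - exact: tedge'.
    - by rewrite C2s.
    - by rewrite R2_sym; apply: tedge'.
  lia.
have nf : fconnect (fun z => s (t' z)) b a = false.
  apply/negP => h; move/negP: cab; apply; rewrite symR'.
  apply: (connect_sub _ h) => u v /= /eqP <-.
  apply: (connect_trans (connect1 (R2t s t' u))).
  by apply: connect1; rewrite R2s.
rewrite nf /= in f2.
have := ncomp_add (a:=a) (b:=b) symR' (R2_sym s t) cond.
move: f2; rewrite (_ : 1.*2 = 2) // => f2 h; rewrite /R' in IH' h f2' *.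
move: f1' IH' h f2; clear; move: (fcard t' D) (fcard (fun z => s (t' z)) D) (n_comp (R2 s t') D) => A B C.
move: (fcard (fun z => s (t z)) D) (n_comp (R2 s t) D) (fcard s D) (fcard t D) => E F G H. lia.
Qed.

Lemma genus (s t : D -> D) : injective s -> injective t ->
  fcard s D + fcard t D + fcard (fun z => s (t z)) D <= #|D| + 2 * n_comp (R2 s t) D.
Proof. by move=> si ti; apply: genus_N. Qed.

End Genus.

Theorem lemma2p6 (D : finType) (e n : D -> D) :
  edge_perm_ok e -> injective n ->
  planar_map e n -> four_valent n ->
  forall (p x y : D), in_face e n p x -> in_face e n p y -> x != y ->
    ~~ same_edge e x y.
Proof.
move=> [einv efix] ninj planar fv p x y hx hy xy.
rewrite /same_edge eq_sym (negbTE xy) /=; apply/eqP => yex; subst y.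
have einj : injective e := inv_inj einv.
pose F := face_perm e n.
have Finj : injective F by move=> u v /ninj /einj.
have hF : fconnect F x (e x).
  by apply: connect_trans hy; rewrite (fconnect_sym Finj).
have xex : x != e x by rewrite eq_sym efix.
pose e' := fun z => e (tperm x (e x) z).
have e'inj : injective e' by move=> u v /einj /perm_inj.
have e'x : e' x = x by rewrite /e' tpermL einv.
have e'ex : e' (e x) = e x by rewrite /e' tpermR.
have e'D : forall z, z != x -> z != e x -> e' z = e z.
  by move=> z zx zex; rewrite /e' tpermD // eq_sym.
pose R' := R2 n e'.
have symR : connect_sym R' := R2_sym n e'.
(* non-bridge *)
have nb : connect R' x (e x).
  case: (boolP (connect R' x (e x))) => // nb; exfalso.
  pose S := [pred z | connect R' x z].
  have clS : closed R' S := connect_closed symR x.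
  have clnS : fclosed n S.
    by move=> u v /eqP <-; apply: clS; apply: R2s.
  have h4 : fcard n S * 4 = #|S|.
    apply: (fcard_order_set ninj (a:=S) _ clnS); apply/subsetP => z _.
    by rewrite inE fv.
  pose S' := [pred z | (z \in S) && (z != x)].
  have clS' : fclosed e' S'.
    move=> u v /eqP <-; rewrite -!topredE /=.
    by rewrite (clS u (e' u) (R2t _ _ _)) -{2}e'x (inj_eq e'inj).
  have h2 : fcard e' S' * 2 = #|S'|.
    apply: (fcard_order_set e'inj (a:=S') _ clS'); apply/subsetP => z.
    rewrite !inE => /andP [zS zx].
    have zex : z != e x by apply: contraNneq nb => <-.
    have ezx : e z != x by apply: contraNneq zex => <-; rewrite einv.
    have ezex : e z != e x by rewrite (inj_eq einj).
    have ez : e' z = e z := e'D z zx zex.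
    apply/eqP; apply: order2; rewrite ez; first exact: efix.
    by rewrite e'D // einv.
  have h1 : #|S| = #|S'| + 1.
    rewrite (cardD1 x) addnC inE connect0; congr (_ + _).
    by apply: eq_card => z; rewrite !inE andbC.
  lia.
have G := genus ninj e'inj.
have f1 := fcard_swap einj x (e x).
have ff1 : fconnect e (e x) x by rewrite -{2}(einv x) fconnect1.
rewrite ff1 xex /= double0 addn0 in f1.
have f2 := fcard_swap Finj x (e x).
have ff2 : fconnect F (e x) x by rewrite (fconnect_sym Finj).
rewrite ff2 xex /= double0 addn0 in f2.
have hD : fcard e D * 2 = #|D|.
  apply: (fcard_order_set einj (n:=2) (a:=D)).
    apply/subsetP => z _; rewrite inE; apply/eqP; apply: order2; rewrite ?einv //.
  by move=> u v _; rewrite !inE.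
have hk : n_comp R' D = n_comp (glink e n) D.
  apply: eq_n_comp => u v; apply/idP/idP; apply: connect_sub => {}u {}v.
    have ge : forall z, connect (glink e n) z (e' z).
      move=> z; case: (eqVneq z x) => [->|zx]; first by rewrite e'x connect0.
      case: (eqVneq z (e x)) => [->|zex]; first by rewrite e'ex connect0.
      by rewrite e'D // connect1 // /glink /= eqxx.
    have gn : forall z, connect (glink e n) z (n z).
      by move=> z; rewrite connect1 // /glink /= eqxx orbT.
    have gs : connect_sym (glink e n).
      apply: sym_connect_sym => a b /=.
      rewrite /glink /=.       by case: (b == e a); case: (b == n a); case: (a == e b); case: (a == n b).
    rewrite /R' /R2 /=; case/or4P => /eqP ->; rewrite ?gn ?ge //.
      by rewrite gs gn.
    by rewrite gs ge.
  have re : forall z, connect R' z (e z).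
    move=> z; case: (eqVneq z x) => [->|zx]; first exact: nb.
    case: (eqVneq z (e x)) => [->|zex]; first by rewrite einv symR.
    by rewrite -(e'D z) // (connect1 (R2t n e' z)).
  have rn : forall z, connect R' z (n z) by move=> z; exact: (connect1 (R2s n e' z)).
  rewrite /glink /=; case/or4P => /eqP ->; rewrite ?re ?rn //.
    by rewrite symR re.
  by rewrite symR rn.
move: planar; rewrite /planar_map /num_vertices /num_faces /num_edges /num_components.
rewrite -hk.
change (fcard (fun z => n (e' z)) D) with (fcard (fun z => F (tperm x (e x) z)) D) in G.
change (fcard e' D) with (fcard (fun z => e (tperm x (e x) z)) D) in G.
rewrite -/R' in G; change (face_perm e n) with F.
move: G f1 f2 hD; clear.
move: (fcard (fun z => F (tperm x (e x) z)) D) (fcard (fun z => e (tperm x (e x) z)) D).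
move: (fcard n D) (fcard F D) (fcard e D) (n_comp R' D) #|D|.
lia.
Qed.
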